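(* Let $n\ge1$. For every function $f(t)=\sum_{j=1}^na_je^{\lambda_jt}$ with $a_j,\lambda_j\in\mathbb{C}$ and $\mathrm{Re}(\lambda_j)<1/2$ for all $j$, $$\|f'\| \le \left(\max_{1\le j\le n}|\lambda_j| + \left(\sum_{j=1}^n\left(1-2\mathrm{Re}(\lambda_j)\right)\sum_{k=j+1}^n\left(1-2\mathrm{Re}(\lambda_k)\right)\right)^{1/2}\right)\|f\|,$$ where $\|g\|:=\left(\int_0^\infty|g(t)|^2e^{-t}\,dt\right)^{1/2}$. *)

(* Defs.v *)
From Stdlib Require Import Reals.
Open Scope R_scope.

Fixpoint rsum (n : nat) (F : nat -> R) : R :=
  match n with O => 0 | S k => rsum k F + F k end.

(* rmaxn n F = max(0, F 0, ..., F (n-1)); used on nonnegative F with n >= 1 *)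
Fixpoint rmaxn (n : nat) (F : nat -> R) : R :=
  match n with O => 0 | S k => Rmax (rmaxn k F) (F k) end.

Definition cmod (x y : R) : R := sqrt (x ^ 2 + y ^ 2).

(* Real and imaginary parts of f(t) = sum_{j<n} a_j e^{lambda_j t},
   a_j = ar j + i ai j, lambda_j = lr j + i li j,
   e^{lambda t} = e^{lr t} (cos (li t) + i sin (li t)). *)
Definition expsum_re (n : nat) (ar ai lr li : nat -> R) (t : R) : R :=
  rsum n (fun j => exp (lr j * t) * (ar j * cos (li j * t) - ai j * sin (li j * t))).
Definition expsum_im (n : nat) (ar ai lr li : nat -> R) (t : R) : R :=
  rsum n (fun j => exp (lr j * t) * (ar j * sin (li j * t) + ai j * cos (li j * t))).

Definition has_improper_integral0 (g : R -> R) (L : R) : Prop :=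
  exists pr : (forall T : R, Riemann_integrable g 0 T),
    forall eps : R, eps > 0 -> exists M : R, forall T : R, T >= M ->
      Rabs (RiemannInt (pr T) - L) < eps.

(* Main.v *)
Require Import Defs.
From Stdlib Require Import Reals Lra Lia Psatz FunctionalExtensionality.
From Coquelicot Require Import Coquelicot.
Open Scope R_scope.

Fixpoint csum (n : nat) (F : nat -> C) : C :=
  match n with O => RtoC 0 | S k => Cplus (csum k F) (F k) end.

Lemma csum_ext n F G : (forall j, (j < n)%nat -> F j = G j) -> csum n F = csum n G.
Proof. induction n; simpl; intros H; auto. rewrite IHn; [rewrite H; auto|]. intros; apply H; lia. Qed.

Lemma csum_plus n F G : csum n (fun j => Cplus (F j) (G j)) = Cplus (csum n F) (csum n G).
Proof. induction n; simpl. apply injective_projections; simpl; ring. rewrite IHn. ring. Qed.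

Lemma csum_scal n a F : Cmult a (csum n F) = csum n (fun j => Cmult a (F j)).
Proof. induction n; simpl. apply injective_projections; simpl; ring. rewrite <- IHn. field. Qed.

Lemma csum_scal_r n a F : Cmult (csum n F) a = csum n (fun j => Cmult (F j) a).
Proof. induction n; simpl. apply injective_projections; simpl; ring. rewrite <- IHn. field. Qed.

Lemma csum_conj n F : Cconj (csum n F) = csum n (fun j => Cconj (F j)).
Proof. induction n; simpl. apply injective_projections; simpl; ring. rewrite Cplus_conj, IHn; auto. Qed.

Lemma csum_prod n m F G : Cmult (csum n F) (csum m G) = csum n (fun j => csum m (fun k => Cmult (F j) (G k))).
Proof. rewrite csum_scal_r. apply csum_ext; intros. apply csum_scal. Qed.

Lemma csum_fst n F : fst (csum n F) = rsum n (fun j => fst (F j)).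
Proof. induction n; simpl; auto. rewrite <- IHn; auto. Qed.
Lemma csum_snd n F : snd (csum n F) = rsum n (fun j => snd (F j)).
Proof. induction n; simpl; auto. rewrite <- IHn; auto. Qed.

Lemma csum_zero_last n F : F n = RtoC 0 -> csum (S n) F = csum n F.
Proof. simpl; intros H; rewrite H. apply injective_projections; simpl; ring. Qed.

Lemma C_neq0 (z : C) : fst z <> 0 -> z <> RtoC 0.
Proof. intros H E; apply H; rewrite E; reflexivity. Qed.

Definition sv (lam : nat -> C) j : C := Cminus (RtoC (1/2)) (lam j).
Definition wr (lam : nat -> C) j : R := 1 - 2 * fst (lam j).
Definition Kf lam j k : C := Cplus (sv lam j) (Cconj (sv lam k)).
Definition Qf lam n (c : nat -> C) : R :=
  fst (csum n (fun j => csum n (fun k => Cdiv (Cmult (c j) (Cconj (c k))) (Kf lam j k)))).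
Definition yv lam n (c : nat -> C) j : C := Cdiv (Cmult (c j) (RtoC (wr lam n))) (Kf lam j n).
Definition bv lam n j : C := Cdiv (Cminus (sv lam j) (sv lam n)) (Kf lam j n).

Lemma Kf_neq0 lam j k : fst (lam j) < 1/2 -> fst (lam k) < 1/2 -> Kf lam j k <> RtoC 0.
Proof. intros; apply C_neq0. unfold Kf, sv; simpl. lra. Qed.

Lemma Kf_conj lam j k : Cconj (Kf lam j k) = Kf lam k j.
Proof. unfold Kf, sv. apply injective_projections; simpl; ring. Qed.


Lemma Kf_nn lam n : Kf lam n n = RtoC (wr lam n).
Proof. unfold Kf, sv, wr. apply injective_projections; simpl; lra. Qed.

Lemma Qpt lam n c j k : fst (lam j) < 1/2 -> fst (lam k) < 1/2 -> fst (lam n) < 1/2 ->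
  Cdiv (Cmult (c j) (Cconj (c k))) (Kf lam j k) =
  Cplus (Cdiv (Cmult (yv lam n c j) (Cconj (yv lam n c k))) (RtoC (wr lam n)))
        (Cdiv (Cmult (Cmult (bv lam n j) (c j)) (Cconj (Cmult (bv lam n k) (c k)))) (Kf lam j k)).
Proof.
  intros hj hk hn.
  assert (Hjk := Kf_neq0 lam j k hj hk).
  assert (Hjn := Kf_neq0 lam j n hj hn).
  assert (Hnk := Kf_neq0 lam n k hn hk).
  assert (Hkn := Kf_neq0 lam k n hk hn).
  assert (Hnn := Kf_neq0 lam n n hn hn).
  unfold yv, bv. rewrite <- Kf_nn.
  rewrite !Cmult_conj, !Cdiv_conj by auto. rewrite !Cmult_conj, Cminus_conj, !Kf_conj.
  revert Hjk Hjn Hnk Hkn Hnn. unfold Kf.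
  generalize (sv lam j) (sv lam k) (sv lam n). intros u v p H1 H2 H3 H4 H5.
  field. repeat split; auto.
Qed.

Lemma bv_n lam n : bv lam n n = RtoC 0.
Proof. unfold bv, Cdiv. replace (Cminus (sv lam n) (sv lam n)) with (RtoC 0) by ring. ring. Qed.

Lemma Cmod_sq (z : C) : Cmod z ^ 2 = fst z ^ 2 + snd z ^ 2.
Proof. unfold Cmod. rewrite pow2_sqrt; auto. nra. Qed.

Lemma fst_norm_div (Y : C) w : w <> 0 -> fst (Cdiv (Cmult Y (Cconj Y)) (RtoC w)) = Cmod Y ^ 2 / w.
Proof. intros H. rewrite Cmod_sq. destruct Y as [a b]. simpl. field. auto. Qed.

Lemma fst_Cplus (a b : C) : fst (Cplus a b) = fst a + fst b.
Proof. reflexivity. Qed.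

Lemma conj0z (z : C) : Cconj (Cmult (RtoC 0) z) = RtoC 0.
Proof. destruct z; apply injective_projections; simpl; lra. Qed.

Lemma csum_zero n : csum n (fun _ => RtoC 0) = RtoC 0.
Proof. induction n; simpl; auto. rewrite IHn. ring. Qed.

Lemma Q_split lam n c : (forall j, (j < S n)%nat -> fst (lam j) < 1/2) ->
  Qf lam (S n) c = Cmod (csum (S n) (yv lam n c)) ^ 2 / wr lam n
                   + Qf lam n (fun j => Cmult (bv lam n j) (c j)).
Proof.
  intros H.
  assert (Hn : fst (lam n) < 1/2) by (apply H; lia).
  assert (Hw : wr lam n <> 0) by (unfold wr; lra).
  unfold Qf at 1.
  rewrite (csum_ext (S n) _ (fun j => Cplus
     (csum (S n) (fun k => Cdiv (Cmult (yv lam n c j) (Cconj (yv lam n c k))) (RtoC (wr lam n))))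
     (csum (S n) (fun k => Cdiv (Cmult (Cmult (bv lam n j) (c j)) (Cconj (Cmult (bv lam n k) (c k)))) (Kf lam j k))))).
  2:{ intros j Hj. rewrite <- csum_plus. apply csum_ext. intros k Hk. apply Qpt; auto. }
  rewrite csum_plus, fst_Cplus. f_equal.
  - rewrite <- fst_norm_div by auto. f_equal.
    unfold Cdiv. rewrite csum_conj, csum_prod, csum_scal_r. apply csum_ext; intros.
    rewrite csum_scal_r. reflexivity.
  - unfold Qf. rewrite csum_zero_last.
    + f_equal. apply csum_ext; intros. apply csum_zero_last. rewrite bv_n, conj0z. unfold Cdiv. ring.
    + rewrite csum_zero_last.
      * rewrite <- (csum_zero n). apply csum_ext; intros. rewrite bv_n. unfold Cdiv. ring.
      * rewrite bv_n. unfold Cdiv. ring.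
Qed.

Lemma sig_split lam n c : (forall j, (j < S n)%nat -> fst (lam j) < 1/2) ->
  csum (S n) c = Cplus (csum (S n) (yv lam n c)) (csum n (fun j => Cmult (bv lam n j) (c j))).
Proof.
  intros H.
  assert (Hn : fst (lam n) < 1/2) by (apply H; lia).
  rewrite <- (csum_zero_last n (fun j => Cmult (bv lam n j) (c j))).
  2:{ rewrite bv_n. ring. }
  rewrite <- csum_plus. apply csum_ext. intros j Hj.
  assert (Hjn := Kf_neq0 lam j n (H j Hj) Hn).
  unfold yv, bv. rewrite <- Kf_nn. revert Hjn. unfold Kf.
  generalize (Cconj (sv lam n)) (sv lam j) (sv lam n). intros q u p Hq. field. auto.
Qed.

Lemma csum_opp n F : Copp (csum n F) = csum n (fun j => Copp (F j)).
Proof. induction n; simpl. apply injective_projections; simpl; lra. rewrite <- IHn. ring. Qed.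

Lemma Y_Lambda lam n c : (forall j, (j < S n)%nat -> fst (lam j) < 1/2) ->
  csum (S n) (yv lam n (fun j => Cmult (lam j) (c j))) =
  Cminus (Cmult (lam n) (csum (S n) (yv lam n c)))
         (Cmult (RtoC (wr lam n)) (csum n (fun j => Cmult (bv lam n j) (c j)))).
Proof.
  intros H.
  assert (Hn : fst (lam n) < 1/2) by (apply H; lia).
  rewrite <- (csum_zero_last n (fun j => Cmult (bv lam n j) (c j))).
  2:{ rewrite bv_n. ring. }
  rewrite csum_scal, csum_scal. unfold Cminus.
  rewrite csum_opp, <- csum_plus. apply csum_ext. intros j Hj.
  assert (Hjn := Kf_neq0 lam j n (H j Hj) Hn).
  unfold yv, bv. revert Hjn. unfold Kf.
  generalize (Cconj (sv lam n)) (RtoC (wr lam n)). intros q w Hq. unfold sv. field. auto.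
Qed.

Lemma le_of_sq (a b : R) : 0 <= b -> a * a <= b * b -> a <= b.
Proof. intros. nra. Qed.

Lemma key (al M Mn x r p Fn : R) : 0 <= al -> al <= M -> 0 <= Mn -> Mn <= M ->
  0 <= x -> 0 <= r -> 0 <= p -> 0 <= Fn ->
  (al*x+p*r)^2 + ((Mn+Fn)*r)^2 <= (M + sqrt(Fn^2+p^2))^2 * (x^2+r^2).
Proof.
  intros.
  assert (HF : sqrt (Fn^2+p^2) * sqrt (Fn^2+p^2) = Fn^2+p^2) by (apply sqrt_sqrt; nra).
  assert (HF0 := sqrt_pos (Fn^2+p^2)).
  set (F := sqrt (Fn^2+p^2)) in *.
  assert (HN : sqrt (x^2+r^2) * sqrt (x^2+r^2) = x^2+r^2) by (apply sqrt_sqrt; nra).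
  assert (HN0 := sqrt_pos (x^2+r^2)).
  set (N := sqrt (x^2+r^2)) in *.
  assert (Hr : r <= N) by (apply le_of_sq; nra).
  assert (Hc : p*x + Fn*r <= F*N).
  { apply le_of_sq. nra. 
    replace (F*N*(F*N)) with ((F*F)*(N*N)) by ring. rewrite HF, HN. pose proof (pow2_ge_0 (p*r - Fn*x)). nra. }
  assert (G1 : (al*x+p*r)^2 <= (M*x+p*r)^2) by (apply pow_incr; split; nra).
  assert (G2 : ((Mn+Fn)*r)^2 <= ((M+Fn)*r)^2) by (apply pow_incr; split; nra).
  assert (G3 : 2*M*r*(p*x+Fn*r) <= 2*M*N*(F*N)).
  { apply Rmult_le_compat; nra. }
  assert (G4 : (F*F)*(r*r) <= (F*F)*(N*N)) by nra.
  replace (x^2+r^2) with (N*N) by (rewrite HN; ring).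
  nra.
Qed.

Lemma real2 (m a b w W Q : R) : 0 <= a -> 0 <= b -> 0 < w -> 0 <= W -> 0 <= Q ->
  b*b <= W*Q -> 0 <= m -> m <= a + b -> m^2 <= (W+w)*(a^2/w+Q).
Proof.
  intros.
  set (u := a / w).
  assert (Ha : a = u * w) by (unfold u; field; lra).
  assert (Hu : 0 <= u) by (unfold u; unfold Rdiv; apply Rmult_le_pos; [lra| apply Rlt_le, Rinv_0_lt_compat; lra]).
  clearbody u.
  replace (a^2/w) with (u*u*w) by (rewrite Ha; field; lra).
  assert (E1 : m^2 <= (a+b)^2) by (apply pow_incr; lra).
  assert (E2 : 2*u*b <= W*u*u + Q).
  { assert (0 <= W*u*u) by (repeat apply Rmult_le_pos; lra). apply le_of_sq. lra. pose proof (pow2_ge_0 (W*u*u - Q)). assert (u*u*(b*b) <= u*u*(W*Q)) by (apply Rmult_le_compat_l; [apply Rmult_le_pos|]; lra). nra. }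
  rewrite Ha in E1. nra.
Qed.

Lemma real3 (m d al a b w W Q Mn Fn2 : R) : 0 <= al -> 0 <= a -> 0 <= b -> 0 < w ->
  0 <= W -> 0 <= Q -> 0 <= Mn -> 0 <= Fn2 -> b*b <= W*Q -> 0 <= m ->
  m <= al*a + w*b -> d <= (Mn + sqrt Fn2)^2 * Q ->
  m^2/w + d <= (Rmax Mn al + sqrt(Fn2 + w*W))^2 * (a^2/w + Q).
Proof.
  intros.
  assert (Hsw : sqrt w * sqrt w = w) by (apply sqrt_sqrt; lra).
  assert (Hsw0 : 0 < sqrt w) by (apply sqrt_lt_R0; lra).
  set (sw := sqrt w) in *.
  set (x := a / sw).
  assert (Ha : a = x * sw) by (unfold x; field; lra).
  assert (Hx : 0 <= x) by (unfold x; unfold Rdiv; apply Rmult_le_pos; [lra| apply Rlt_le, Rinv_0_lt_compat; lra]).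
  clearbody x.
  assert (HQ : sqrt Q * sqrt Q = Q) by (apply sqrt_sqrt; lra).
  assert (HW : sqrt W * sqrt W = W) by (apply sqrt_sqrt; lra).
  assert (Hb : b <= sqrt W * sqrt Q).
  { apply le_of_sq. apply Rmult_le_pos; apply sqrt_pos.
    replace (sqrt W * sqrt Q * (sqrt W * sqrt Q)) with ((sqrt W * sqrt W) * (sqrt Q * sqrt Q)) by ring.
    rewrite HW, HQ; auto. }
  assert (Hp : sqrt (w*W) = sw * sqrt W) by (unfold sw; apply sqrt_mult; lra).
  assert (HFn : sqrt Fn2 ^ 2 = Fn2) by (apply pow2_sqrt; lra).
  assert (Hpp : sqrt (w*W) ^ 2 = w*W) by (apply pow2_sqrt; nra).
  assert (K := key al (Rmax Mn al) Mn x (sqrt Q) (sqrt (w*W)) (sqrt Fn2)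
      ltac:(lra) (Rmax_r _ _) ltac:(lra) (Rmax_l _ _) Hx (sqrt_pos _) (sqrt_pos _) (sqrt_pos _)).
  rewrite HFn, Hpp in K.
  assert (E1 : m^2/w <= (al*x + sqrt (w*W) * sqrt Q)^2).
  { rewrite Hp.
    assert (m^2 <= (al*a+w*b)^2) by (apply pow_incr; lra).
    assert (m^2/w <= (al*a+w*b)^2/w) by (apply Rmult_le_compat_r; [apply Rlt_le, Rinv_0_lt_compat; lra | auto]).
    replace ((al*a+w*b)^2/w) with ((al*x + sw*b)^2) in H12.
    2:{ rewrite Ha, <- Hsw. field. lra. }
    eapply Rle_trans; [exact H12|]. apply pow_incr. split.
    - apply Rplus_le_le_0_compat; apply Rmult_le_pos; lra.
    - assert (sw * b <= sw * sqrt W * sqrt Q) by (rewrite Rmult_assoc; apply Rmult_le_compat_l; lra). lra. }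
  assert (E2 : d <= ((Mn + sqrt Fn2) * sqrt Q)^2).
  { replace (((Mn + sqrt Fn2) * sqrt Q)^2) with ((Mn + sqrt Fn2)^2 * (sqrt Q * sqrt Q)) by ring.
    rewrite HQ; auto. }
  replace (a^2/w + Q) with (x^2 + sqrt Q ^ 2).
  2:{ rewrite (pow2_sqrt Q) by lra. rewrite Ha, <- Hsw. field. lra. }
  lra.
Qed.

Definition Mx lam n := rmaxn n (fun j => Cmod (lam j)).
Definition Wn lam n := rsum n (fun j => wr lam j).
Definition F2 lam n := rsum n (fun j => wr lam j * rsum n (fun k => if (j <? k)%nat then wr lam k else 0)).

Lemma rsum_ext n F G : (forall j, (j < n)%nat -> F j = G j) -> rsum n F = rsum n G.
Proof. induction n; simpl; intros H; auto. rewrite IHn; [rewrite H; auto|]. intros; apply H; lia. Qed.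

Lemma rsum_S n F : rsum (S n) F = rsum n F + F n.
Proof. reflexivity. Qed.

Lemma rsum_plus n F G : rsum n (fun j => F j + G j) = rsum n F + rsum n G.
Proof. induction n; simpl. ring. rewrite IHn. ring. Qed.

Lemma rsum_scal n a F : rsum n (fun j => F j * a) = rsum n F * a.
Proof. induction n; simpl. ring. rewrite IHn. ring. Qed.

Lemma rsum_nonneg n F : (forall j, (j < n)%nat -> 0 <= F j) -> 0 <= rsum n F.
Proof. induction n; simpl; intros H. lra. assert (0 <= F n) by (apply H; lia).
  assert (0 <= rsum n F) by (apply IHn; intros; apply H; lia). lra. Qed.

Lemma rmaxn_nonneg n F : 0 <= rmaxn n F.
Proof. induction n; simpl. lra. eapply Rle_trans; [exact IHn| apply Rmax_l]. Qed.

Lemma F2_S lam n : F2 lam (S n) = F2 lam n + wr lam n * Wn lam n.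
Proof.
  unfold F2, Wn. rewrite rsum_S.
  rewrite (rsum_ext (S n) (fun k => if (n <? k)%nat then wr lam k else 0) (fun _ => 0)).
  2:{ intros k Hk. destruct (Nat.ltb_spec n k); [lia|auto]. }
  assert (Z : forall m, rsum m (fun _ => 0) = 0) by (induction m; simpl; [auto|rewrite IHm; ring]).
  rewrite Z, Rmult_0_r, Rplus_0_r.
  rewrite (rsum_ext n _ (fun j => wr lam j * rsum n (fun k => if (j <? k)%nat then wr lam k else 0) + wr lam j * wr lam n)).
  2:{ intros j Hj. simpl. destruct (Nat.ltb_spec j n); [ring|lia]. }
  rewrite rsum_plus, rsum_scal. change (rsum n (wr lam)) with (rsum n (fun j => wr lam j)). ring.
Qed.

Lemma Qf_ext lam n c d : (forall j, (j < n)%nat -> c j = d j) -> Qf lam n c = Qf lam n d.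
Proof. intros H. unfold Qf. f_equal. apply csum_ext; intros. apply csum_ext; intros. rewrite !H; auto. Qed.

Lemma Cmod_minus_le (a b : C) : Cmod (Cminus a b) <= Cmod a + Cmod b.
Proof. unfold Cminus. eapply Rle_trans; [apply Cmod_triangle|]. rewrite Cmod_opp. lra. Qed.

Lemma alg_main lam n : (forall j, (j < n)%nat -> fst (lam j) < 1/2) -> forall c,
  0 <= Qf lam n c /\ Cmod (csum n c) ^ 2 <= Wn lam n * Qf lam n c /\
  Qf lam n (fun j => Cmult (lam j) (c j)) <= (Mx lam n + sqrt (F2 lam n))^2 * Qf lam n c.
Proof.
  induction n as [|n IH]; intros H c.
  - unfold Qf, Wn, Mx, F2; simpl. rewrite Cmod_0. lra.
  - assert (Hn : fst (lam n) < 1/2) by (apply H; lia).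
    assert (Hw : 0 < wr lam n) by (unfold wr; lra).
    assert (H' : forall j, (j < n)%nat -> fst (lam j) < 1/2) by (intros; apply H; lia).
    assert (HW : 0 <= Wn lam n).
    { apply rsum_nonneg. intros j Hj. unfold wr. specialize (H' j Hj). lra. }
    set (c' := fun j => Cmult (bv lam n j) (c j)).
    destruct (IH H' c') as [q0 [s0 d0]].
    assert (HF2 : 0 <= F2 lam n).
    { clear -H'. induction n. unfold F2; simpl; lra. rewrite F2_S.
      assert (0 <= wr lam n) by (unfold wr; specialize (H' n ltac:(lia)); lra).
      assert (0 <= Wn lam n).
      { apply rsum_nonneg. intros j Hj. unfold wr. specialize (H' j ltac:(lia)). lra. }
      assert (0 <= F2 lam n) by (apply IHn; intros; apply H'; lia). nra. }
    rewrite (Q_split lam n c H).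
    fold c'.
    set (Y := csum (S n) (yv lam n c)).
    assert (HY : 0 <= Cmod Y ^ 2 / wr lam n).
    { unfold Rdiv. apply Rmult_le_pos. apply pow2_ge_0. apply Rlt_le, Rinv_0_lt_compat; lra. }
    split; [|split].
    + lra.
    + rewrite (sig_split lam n c H). fold Y c'.
      replace (Wn lam (S n)) with (Wn lam n + wr lam n) by (unfold Wn; simpl; ring).
      apply (real2 _ (Cmod Y) (Cmod (csum n c'))); auto using Cmod_ge_0.
      * rewrite <- Rmult_1_r with (r := Cmod (csum n c')), <- (Rmult_1_r (Cmod _)) at 1. simpl in s0. lra.
      * apply Cmod_triangle.
    + rewrite (Q_split lam n _ H). rewrite (Y_Lambda lam n c H). fold Y c'.
      rewrite (Qf_ext lam n _ (fun j => Cmult (lam j) (c' j))).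
      2:{ intros j Hj. unfold c'. ring. }
      unfold Mx. simpl rmaxn. fold (Mx lam n). rewrite F2_S.
      apply (real3 _ _ (Cmod (lam n)) (Cmod Y) (Cmod (csum n c'))); auto using Cmod_ge_0.
      * unfold Mx; apply rmaxn_nonneg.
      * simpl in s0. lra.
      * eapply Rle_trans; [apply Cmod_minus_le|]. rewrite !Cmod_mult, Cmod_R, Rabs_pos_eq by lra. lra.
Qed.

Definition Xf (a b t : R) : C := (exp (a * t) * cos (b * t), exp (a * t) * sin (b * t)).

Lemma derX (A : C) a b t :
  is_derive (fun t => fst (Cmult A (Xf a b t))) t (fst (Cmult (Cmult (a, b) A) (Xf a b t))).
Proof.
  destruct A as [p q]. unfold Xf. simpl.
  auto_derive; auto. ring.
Qed.

Lemma is_derive_rsum n (F : nat -> R -> R) (dF : nat -> R) t :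
  (forall j, (j < n)%nat -> is_derive (F j) t (dF j)) ->
  is_derive (fun t => rsum n (fun j => F j t)) t (rsum n dF).
Proof.
  induction n; intros H; simpl.
  - apply is_derive_Reals, derivable_pt_lim_const.
  - apply (is_derive_plus (fun t => rsum n (fun j => F j t)) (F n)).
    + apply IHn; intros; apply H; lia.
    + apply H; lia.
Qed.

Definition tends0 (h : R -> R) := forall eps, eps > 0 -> exists M, forall T, M <= T -> Rabs (h T) < eps.

Lemma tends0_rsum n (F : nat -> R -> R) : (forall j, (j < n)%nat -> tends0 (F j)) ->
  tends0 (fun T => rsum n (fun j => F j T)).
Proof.
  induction n; intros H eps Heps; simpl.
  - exists 0. intros. rewrite Rabs_R0. lra.
  - destruct (IHn ltac:(intros; apply H; lia) (eps/2) ltac:(lra)) as [M1 HM1].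
    destruct (H n ltac:(lia) (eps/2) ltac:(lra)) as [M2 HM2].
    exists (Rmax M1 M2). intros T HT.
    specialize (HM1 T ltac:(eapply Rle_trans; [apply Rmax_l|exact HT])).
    specialize (HM2 T ltac:(eapply Rle_trans; [apply Rmax_r|exact HT])).
    eapply Rle_lt_trans; [apply Rabs_triang|]. lra.
Qed.

Lemma tends0_X (A : C) a b : a < 0 -> tends0 (fun T => fst (Cmult A (Xf a b T))).
Proof.
  intros Ha eps Heps. destruct A as [p q].
  set (K := Rabs p + Rabs q + 1).
  assert (HK : 0 < K) by (unfold K; pose proof (Rabs_pos p); pose proof (Rabs_pos q); lra).
  set (d := eps / K).
  assert (Hd : 0 < d) by (unfold d; apply Rdiv_lt_0_compat; lra).
  exists (ln d / a). intros T HT.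
  assert (E : exp (a * T) <= d).
  { rewrite <- (exp_ln d Hd). destruct (Req_dec (a*T) (ln d)) as [e|ne]; [rewrite e; lra|].
    left. apply exp_increasing.
    assert (a * T <= a * (ln d / a)) by (apply Rmult_le_compat_neg_l; lra).
    replace (a * (ln d / a)) with (ln d) in H by (field; lra). lra. }
  assert (Ep := exp_pos (a*T)).
  unfold Xf; simpl.
  assert (B1 : Rabs (p * (exp (a * T) * cos (b * T))) <= Rabs p * exp (a*T)).
  { rewrite !Rabs_mult, (Rabs_pos_eq (exp _)) by lra.
    pose proof (Rabs_pos p). assert (Rabs (cos (b*T)) <= 1) by apply Rabs_le, COS_bound.
    apply Rmult_le_compat_l; auto. rewrite <- (Rmult_1_r (exp _)) at 2. apply Rmult_le_compat_l; lra. }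
  assert (B2 : Rabs (q * (exp (a * T) * sin (b * T))) <= Rabs q * exp (a*T)).
  { rewrite !Rabs_mult, (Rabs_pos_eq (exp _)) by lra.
    pose proof (Rabs_pos q). assert (Rabs (sin (b*T)) <= 1) by apply Rabs_le, SIN_bound.
    apply Rmult_le_compat_l; auto. rewrite <- (Rmult_1_r (exp _)) at 2. apply Rmult_le_compat_l; lra. }
  unfold Rminus. eapply Rle_lt_trans; [apply Rabs_triang|]. rewrite Rabs_Ropp.
  assert ((Rabs p + Rabs q) * exp (a*T) <= (Rabs p + Rabs q) * d).
  { apply Rmult_le_compat_l; [pose proof (Rabs_pos p); pose proof (Rabs_pos q); lra| auto]. }
  assert ((Rabs p + Rabs q) * d < eps).
  { unfold d. apply (Rmult_lt_reg_r K); auto. field_simplify; [|lra]. unfold K.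
    pose proof (Rabs_pos p); pose proof (Rabs_pos q). nra. }
  lra.
Qed.

Definition Sf (lr li : nat -> R) (c : nat -> C) n t : C :=
  csum n (fun j => Cmult (c j) (Xf (lr j) (li j) t)).
Definition Kc (c : nat -> C) j k : C := Cmult (c j) (Cconj (c k)).
Definition muc (lr li : nat -> R) j k : C := (lr j + lr k - 1, li j - li k).
Definition gf lr li c n t :=
  rsum n (fun j => rsum n (fun k => fst (Cmult (Kc c j k) (Xf (lr j + lr k - 1) (li j - li k) t)))).
Definition Gf lr li c n t :=
  rsum n (fun j => rsum n (fun k => fst (Cmult (Cdiv (Kc c j k) (muc lr li j k)) (Xf (lr j + lr k - 1) (li j - li k) t)))).

Lemma prodX a1 b1 a2 b2 t :
  Cmult (Cmult (Xf a1 b1 t) (Cconj (Xf a2 b2 t))) (RtoC (exp (- t))) = Xf (a1 + a2 - 1) (b1 - b2) t.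
Proof.
  unfold Xf.
  replace ((a1 + a2 - 1) * t) with (a1 * t + a2 * t + - t) by ring.
  replace ((b1 - b2) * t) with (b1 * t - b2 * t) by ring.
  rewrite !exp_plus, cos_minus, sin_minus.
  apply injective_projections; simpl; ring.
Qed.

Lemma fst_scal (z : C) e : fst z * e = fst (Cmult z (RtoC e)).
Proof. destruct z; simpl; ring. Qed.

Lemma g_eq lr li c n t :
  cmod (fst (Sf lr li c n t)) (snd (Sf lr li c n t)) ^ 2 * exp (- t) = gf lr li c n t.
Proof.
  change (cmod (fst (Sf lr li c n t)) (snd (Sf lr li c n t))) with (Cmod (Sf lr li c n t)).
  rewrite Cmod_sq.
  replace (fst (Sf lr li c n t) ^ 2 + snd (Sf lr li c n t) ^ 2)
    with (fst (Cmult (Sf lr li c n t) (Cconj (Sf lr li c n t))))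
    by (destruct (Sf lr li c n t); simpl; ring).
  rewrite fst_scal. unfold Sf. rewrite csum_conj, csum_prod, csum_scal_r, csum_fst.
  unfold gf. apply rsum_ext. intros j Hj.
  rewrite csum_scal_r, csum_fst. apply rsum_ext. intros k Hk.
  f_equal. rewrite <- prodX. unfold Kc. rewrite Cmult_conj. ring.
Qed.

Lemma muc_neq0 lr li j k : lr j < 1/2 -> lr k < 1/2 -> muc lr li j k <> RtoC 0.
Proof. intros; apply C_neq0; unfold muc; simpl; lra. Qed.

Lemma G_deriv lr li c n t : (forall j, (j < n)%nat -> lr j < 1/2) ->
  is_derive (Gf lr li c n) t (gf lr li c n t).
Proof.
  intros H. unfold Gf, gf.
  apply (is_derive_rsum n (fun j t => rsum n (fun k => fst (Cmult (Cdiv (Kc c j k) (muc lr li j k)) (Xf (lr j + lr k - 1) (li j - li k) t))))).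
  intros j Hj.
  apply (is_derive_rsum n (fun k t => fst (Cmult (Cdiv (Kc c j k) (muc lr li j k)) (Xf (lr j + lr k - 1) (li j - li k) t)))).
  intros k Hk.
  eapply is_derive_ext; [intros; reflexivity|].
  replace (fst (Cmult (Kc c j k) (Xf (lr j + lr k - 1) (li j - li k) t)))
    with (fst (Cmult (Cmult (lr j + lr k - 1, li j - li k) (Cdiv (Kc c j k) (muc lr li j k))) (Xf (lr j + lr k - 1) (li j - li k) t))).
  - apply derX.
  - f_equal. f_equal. assert (Hm := muc_neq0 lr li j k (H j Hj) (H k Hk)). revert Hm.
    unfold muc. intros Hm. field. auto.
Qed.

Lemma g_cont lr li c n t : continuous (gf lr li c n) t.
Proof.
  apply (@ex_derive_continuous R_AbsRing R_NormedModule). unfold gf.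
  eexists.
  apply (is_derive_rsum n (fun j t => rsum n (fun k => fst (Cmult (Kc c j k) (Xf (lr j + lr k - 1) (li j - li k) t))))).
  intros j Hj.
  apply (is_derive_rsum n (fun k t => fst (Cmult (Kc c j k) (Xf (lr j + lr k - 1) (li j - li k) t)))).
  intros k Hk. apply derX.
Qed.

Lemma rsum_opp n F : rsum n (fun j => - F j) = - rsum n F.
Proof. induction n; simpl. ring. rewrite IHn. ring. Qed.

Lemma Kf_mu lr li j k : Kf (fun j => (lr j, li j)) j k = Copp (muc lr li j k).
Proof. unfold Kf, sv, muc. apply injective_projections; simpl; lra. Qed.

Lemma small_zero x : (forall eps, eps > 0 -> Rabs x < eps) -> x = 0.
Proof.
  intros H. destruct (Req_dec x 0) as [e|ne]; auto.
  assert (Hp := Rabs_pos_lt x ne). specialize (H (Rabs x) ltac:(lra)). lra.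
Qed.

Lemma integral_Q lr li c n L : (forall j, (j < n)%nat -> lr j < 1/2) ->
  has_improper_integral0 (fun t => cmod (fst (Sf lr li c n t)) (snd (Sf lr li c n t)) ^ 2 * exp (- t)) L ->
  L = Qf (fun j => (lr j, li j)) n c.
Proof.
  intros H Hint.
  assert (Eg : (fun t => cmod (fst (Sf lr li c n t)) (snd (Sf lr li c n t)) ^ 2 * exp (- t)) = gf lr li c n)
    by (extensionality t; apply g_eq).
  rewrite Eg in Hint. destruct Hint as [pr Hpr].
  assert (HRI : forall T, RiemannInt (pr T) = Gf lr li c n T - Gf lr li c n 0).
  { intros T. rewrite <- RInt_Reals. apply is_RInt_unique.
    apply (is_RInt_derive (Gf lr li c n) (gf lr li c n)).
    - intros; apply G_deriv; auto.
    - intros; apply g_cont. }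
  assert (Ht : tends0 (Gf lr li c n)).
  { unfold Gf. apply (tends0_rsum n (fun j T => rsum n (fun k => fst (Cmult (Cdiv (Kc c j k) (muc lr li j k)) (Xf (lr j + lr k - 1) (li j - li k) T))))).
    intros j Hj.
    apply (tends0_rsum n (fun k T => fst (Cmult (Cdiv (Kc c j k) (muc lr li j k)) (Xf (lr j + lr k - 1) (li j - li k) T)))).
    intros k Hk. apply tends0_X. pose proof (H j Hj). pose proof (H k Hk). lra. }
  assert (HL : L + Gf lr li c n 0 = 0).
  { apply small_zero. intros eps Heps.
    destruct (Hpr (eps/2) ltac:(lra)) as [M1 HM1].
    destruct (Ht (eps/2) ltac:(lra)) as [M2 HM2].
    set (T := Rmax M1 M2).
    specialize (HM1 T ltac:(apply Rle_ge, Rmax_l)).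
    specialize (HM2 T (Rmax_r _ _)).
    rewrite HRI in HM1.
    replace (L + Gf lr li c n 0) with (Gf lr li c n T - (Gf lr li c n T - Gf lr li c n 0 - L)) by ring.
    eapply Rle_lt_trans; [apply Rabs_triang|]. rewrite Rabs_Ropp. lra. }
  assert (Q0 : Qf (fun j => (lr j, li j)) n c = - Gf lr li c n 0).
  { unfold Qf, Gf. rewrite <- rsum_opp, csum_fst. apply rsum_ext. intros j Hj.
    rewrite <- rsum_opp, csum_fst. apply rsum_ext. intros k Hk.
    unfold Xf. rewrite !Rmult_0_r, exp_0, cos_0, sin_0.
    rewrite Kf_mu. assert (Hm := muc_neq0 lr li j k (H j Hj) (H k Hk)). revert Hm.
    unfold Kc. generalize (muc lr li j k). intros m Hm.
    replace (Cdiv (Cmult (c j) (Cconj (c k))) (Copp m)) with (Copp (Cmult (Cdiv (Cmult (c j) (Cconj (c k))) m) (1 * 1, 1 * 0))).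
    - reflexivity.
    - replace ((1 * 1, 1 * 0) : C) with (RtoC 1) by (apply injective_projections; simpl; ring).
      field. intros E. apply Hm. replace m with (Copp (Copp m)) by ring. rewrite E. ring. }
  rewrite Q0. lra.
Qed.

Lemma re_eq n ar ai lr li t :
  expsum_re n ar ai lr li t = rsum n (fun j => fst (Cmult (ar j, ai j) (Xf (lr j) (li j) t))).
Proof. unfold expsum_re. apply rsum_ext. intros; unfold Xf; simpl; ring. Qed.

Lemma im_eq n ar ai lr li t :
  expsum_im n ar ai lr li t = rsum n (fun j => snd (Cmult (ar j, ai j) (Xf (lr j) (li j) t))).
Proof. unfold expsum_im. apply rsum_ext. intros; unfold Xf; simpl; ring. Qed.

Lemma derX_snd (A : C) a b t :
  is_derive (fun t => snd (Cmult A (Xf a b t))) t (snd (Cmult (Cmult (a, b) A) (Xf a b t))).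
Proof.
  eapply is_derive_ext.
  2:{ replace (snd (Cmult (Cmult (a, b) A) (Xf a b t))) with
        (fst (Cmult (Cmult (a, b) (Cmult A (0, -1))) (Xf a b t))).
      - apply derX.
      - destruct A; unfold Xf; simpl; ring. }
  intros s. destruct A; unfold Xf; simpl; ring.
Qed.

Theorem theorem10p1 (n : nat) (hn : (1 <= n)%nat) (ar ai lr li : nat -> R)
  (hre : forall j : nat, (j < n)%nat -> lr j < 1 / 2)
  (dre dim : R -> R)
  (hdre : forall t : R, derivable_pt_lim (expsum_re n ar ai lr li) t (dre t))
  (hdim : forall t : R, derivable_pt_lim (expsum_im n ar ai lr li) t (dim t))
  (Nf Ndf : R)
  (hNf : has_improper_integral0
     (fun t => (cmod (expsum_re n ar ai lr li t) (expsum_im n ar ai lr li t)) ^ 2 * exp (- t)) Nf)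
  (hNdf : has_improper_integral0
     (fun t => (cmod (dre t) (dim t)) ^ 2 * exp (- t)) Ndf) :
  sqrt Ndf <=
    (rmaxn n (fun j => cmod (lr j) (li j))
     + sqrt (rsum n (fun j => (1 - 2 * lr j) *
               rsum n (fun k => if (j <? k)%nat then 1 - 2 * lr k else 0))))
    * sqrt Nf.
Proof.
  set (lam := fun j : nat => ((lr j, li j) : C)).
  set (c := fun j : nat => ((ar j, ai j) : C)).
  set (cl := fun j => Cmult (lam j) (c j)).
  assert (ERe : expsum_re n ar ai lr li = fun t => fst (Sf lr li c n t)).
  { extensionality t. rewrite re_eq. unfold Sf. rewrite csum_fst. reflexivity. }
  assert (EIm : expsum_im n ar ai lr li = fun t => snd (Sf lr li c n t)).
  { extensionality t. rewrite im_eq. unfold Sf. rewrite csum_snd. reflexivity. }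
  assert (Dre : forall t, dre t = fst (Sf lr li cl n t)).
  { intros t. apply (uniqueness_limite (expsum_re n ar ai lr li) t); auto.
    apply is_derive_Reals. rewrite ERe. unfold Sf.
    apply (is_derive_ext (fun t => rsum n (fun j => fst (Cmult (c j) (Xf (lr j) (li j) t))))); [intros s; symmetry; apply csum_fst|].
    rewrite csum_fst.
    apply (is_derive_rsum n (fun j t => fst (Cmult (c j) (Xf (lr j) (li j) t)))).
    intros j Hj. apply derX. }
  assert (Dim : forall t, dim t = snd (Sf lr li cl n t)).
  { intros t. apply (uniqueness_limite (expsum_im n ar ai lr li) t); auto.
    apply is_derive_Reals. rewrite EIm. unfold Sf.
    apply (is_derive_ext (fun t => rsum n (fun j => snd (Cmult (c j) (Xf (lr j) (li j) t))))); [intros s; symmetry; apply csum_snd|].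
    rewrite csum_snd.
    apply (is_derive_rsum n (fun j t => snd (Cmult (c j) (Xf (lr j) (li j) t)))).
    intros j Hj. apply derX_snd. }
  rewrite ERe, EIm in hNf.
  assert (Edf : (fun t => cmod (dre t) (dim t) ^ 2 * exp (- t)) =
                (fun t => cmod (fst (Sf lr li cl n t)) (snd (Sf lr li cl n t)) ^ 2 * exp (- t))).
  { extensionality t. rewrite Dre, Dim. reflexivity. }
  rewrite Edf in hNdf.
  apply integral_Q in hNf; auto.
  apply integral_Q in hNdf; auto.
  fold lam in hNf, hNdf.
  destruct (alg_main lam n hre c) as [q0 [_ d0]].
  change (sqrt Ndf <= (Mx lam n + sqrt (F2 lam n)) * sqrt Nf).
  assert (HC : 0 <= Mx lam n + sqrt (F2 lam n)).
  { pose proof (sqrt_pos (F2 lam n)). unfold Mx. pose proof (rmaxn_nonneg n (fun j => Cmod (lam j))). lra. }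
  rewrite <- (sqrt_pow2 (Mx lam n + sqrt (F2 lam n))) by auto.
  rewrite <- sqrt_mult by (try apply pow2_ge_0; subst; auto).
  apply sqrt_le_1_alt. subst Nf Ndf. exact d0.
Qed.
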